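(* Let $p$ be a prime and let $\tau:\mathbb Z_p\to \mathbb Z/p[\![x]\!]^\times$ be the continuous homomorphism from the additive group of $p$-adic integers sending $\alpha$ to $(1-x)^\alpha$ (so $1\mapsto 1-x$). Let $K$ be the subfield of the field of formal Laurent series $\mathbb Z/p(\!(x)\!)$ generated by the image of $\tau$. Then the degree $[\mathbb Z/p(\!(x)\!):K]$ is uncountable.
   Context: In the paper $\mathbb Z_p$ is written multiplicatively as $C\otimes\mathbb Z_p=\{t^\alpha:\alpha\in\mathbb Z_p\}$ with $C=\langle t\rangle$ infinite cyclic, and $\tau(t^\alpha)=(1-x)^\alpha$; the homomorphism is well defined and continuous because $(1-x)^{p^i}=1-x^{p^i}$ in characteristic $p$. *)

(* Defs.v *)
From HB Require Import structures.
From mathcomp Require Import all_boot all_order all_algebra.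
From mathcomp Require Import boolp zify.

Set Implicit Arguments.
Unset Strict Implicit.
Unset Printing Implicit Defensive.

Import GRing.Theory.
Local Open Scope ring_scope.

(* Formal power series R[[x]] over an integral domain R, with the Cauchy    *)
(* product; we equip it with an idomainType structure so that the field of  *)
(* formal Laurent series R((x)) can be taken as its fraction field.         *)
Section FPS.
Variable R : idomainType.

Record fps := FPS { coef : nat -> R }.

HB.instance Definition _ := gen_eqMixin fps.
HB.instance Definition _ := gen_choiceMixin fps.

Lemma fpsP (f g : fps) : (forall n, coef f n = coef g n) -> f = g.
Proof. by case: f => f; case: g => g /= h; congr FPS; apply: funext. Qed.

Definition fps0 := FPS (fun _ => 0).
Definition fps_opp f := FPS (fun n => - coef f n).
Definition fps_add f g := FPS (fun n => coef f n + coef g n).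

Lemma fps_addA : associative fps_add.
Proof. by move=> f g h; apply: fpsP => n /=; rewrite addrA. Qed.
Lemma fps_addC : commutative fps_add.
Proof. by move=> f g; apply: fpsP => n /=; rewrite addrC. Qed.
Lemma fps_add0 : left_id fps0 fps_add.
Proof. by move=> f; apply: fpsP => n /=; rewrite add0r. Qed.
Lemma fps_addN : left_inverse fps0 fps_opp fps_add.
Proof. by move=> f; apply: fpsP => n /=; rewrite addNr. Qed.

HB.instance Definition _ :=
  GRing.isZmodule.Build fps fps_addA fps_addC fps_add0 fps_addN.

Definition fps_mul f g :=
  FPS (fun n => \sum_(i < n.+1) coef f i * coef g (n - i)).
Definition fps1 := FPS (fun n => (n == 0)%:R).

Definition trunc n f : {poly R} := \poly_(i < n.+1) coef f i.

Lemma coef_trunc n f i : (i <= n)%N -> (trunc n f)`_i = coef f i.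
Proof. by move=> hi; rewrite /trunc coef_poly ltnS hi. Qed.

Lemma coefM_low n (p q p' q' : {poly R}) :
  (forall i, (i <= n)%N -> p`_i = p'`_i) ->
  (forall i, (i <= n)%N -> q`_i = q'`_i) ->
  (p * q)`_n = (p' * q')`_n.
Proof.
move=> hp hq; rewrite !coefM; apply: eq_bigr => i _.
rewrite hp; last by rewrite -ltnS.
by rewrite hq // leq_subr.
Qed.

Lemma coef_fps_mul n N f g : (n <= N)%N ->
  coef (fps_mul f g) n = (trunc N f * trunc N g)`_n.
Proof.
move=> hn; rewrite /= coefM; apply: eq_bigr => i _.
have hi : (i <= N)%N by rewrite (leq_trans _ hn) // -ltnS.
have hj : (n - i <= N)%N by rewrite (leq_trans (leq_subr _ _) hn).
by rewrite !coef_trunc.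
Qed.

Lemma trunc_mul n f g i : (i <= n)%N ->
  (trunc n (fps_mul f g))`_i = (trunc n f * trunc n g)`_i.
Proof. by move=> hi; rewrite coef_trunc // (coef_fps_mul _ _ hi). Qed.

Lemma fps_mulA : associative fps_mul.
Proof.
move=> f g h; apply: fpsP => n.
rewrite (coef_fps_mul _ _ (leqnn n)) (coef_fps_mul _ _ (leqnn n)).
rewrite (@coefM_low n _ _ (trunc n f) (trunc n g * trunc n h)) //;
  last by move=> i hi; rewrite trunc_mul.
rewrite mulrA; apply: coefM_low => // i hi.
by rewrite trunc_mul.
Qed.

Lemma fps_mulC : commutative fps_mul.
Proof.
move=> f g; apply: fpsP => n.
by rewrite !(coef_fps_mul _ _ (leqnn n)) mulrC.
Qed.

Lemma fps_mul1 : left_id fps1 fps_mul.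
Proof.
move=> f; apply: fpsP => n; rewrite (coef_fps_mul _ _ (leqnn n)).
rewrite (@coefM_low n _ _ 1 (trunc n f)) ?mul1r ?coef_trunc //.
by move=> i hi; rewrite coef_trunc // coef1.
Qed.

Lemma fps_mulDl : left_distributive fps_mul fps_add.
Proof.
move=> f g h; apply: fpsP => n /=; rewrite -big_split /=.
by apply: eq_bigr => i _; rewrite mulrDl.
Qed.

Lemma fps1_neq0 : fps1 != fps0.
Proof.
apply/eqP => /(congr1 (fun f => coef f 0)) /= /eqP.
by rewrite oner_eq0.
Qed.

HB.instance Definition _ :=
  GRing.Zmodule_isComNzRing.Build fps fps_mulA fps_mulC fps_mul1 fps_mulDl
    fps1_neq0.

Definition fps_unit : {pred fps} := fun x => `[< exists y : fps, y * x = 1 >].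
Definition fps_inv (x : fps) : fps :=
  match pselect (exists y : fps, y * x = 1) with
  | left h => projT1 (cid h)
  | right _ => x
  end.

Lemma fps_mulVx : {in fps_unit, left_inverse 1 fps_inv *%R}.
Proof.
move=> x /asboolP hx; rewrite /fps_inv; case: pselect => // h.
by case: (cid h).
Qed.

Lemma fps_unitPl (x y : fps) : y * x = 1 -> fps_unit x.
Proof. by move=> h; apply/asboolP; exists y. Qed.

Lemma fps_invr_out : {in [predC fps_unit], fps_inv =1 id}.
Proof.
move=> x /negP hx; rewrite /fps_inv; case: pselect => // h.
by exfalso; apply: hx; apply/asboolP.
Qed.

HB.instance Definition _ :=
  GRing.ComNzRing_hasMulInverse.Build fps fps_mulVx fps_unitPl fps_invr_out.

Lemma fps_nz_coef (x : fps) : x != 0 -> exists i, coef x i != 0.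
Proof.
move=> hx; case: (pselect (exists i, coef x i != 0)) => // h.
exfalso; move/eqP: hx; apply; apply: fpsP => n /=.
by apply/eqP; apply/negPn/negP => hn; apply: h; exists n.
Qed.

Lemma fps_coefM (x y : fps) n :
  coef (x * y) n = \sum_(i < n.+1) coef x i * coef y (n - i).
Proof. by []. Qed.

Lemma fps_integral : GRing.integral_domain_axiom fps.
Proof.
move=> x y hxy; apply/negPn/negP; rewrite negb_or => /andP[hx hy].
case: (ex_minnP (fps_nz_coef hx)) => i hi imin.
case: (ex_minnP (fps_nz_coef hy)) => j hj jmin.
have : coef (x * y) (i + j) != 0.
  rewrite fps_coefM.
  have hio : (i < (i + j).+1)%N by rewrite ltnS leq_addr.
  rewrite (bigD1 (Ordinal hio)) //= big1 ?addr0.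
    by rewrite addKn mulf_neq0.
  move=> k hk; have hk' : (nat_of_ord k != i) by [].
  case: (ltngtP k i) => hki.
  - have : coef x k == 0.
      by apply/negPn/negP => hn; move: (imin _ hn); rewrite leqNgt hki.
    by move/eqP ->; rewrite mul0r.
  - have : coef y (i + j - k) == 0.
      apply/negPn/negP => hn; move: (jmin _ hn).
      have := ltn_ord k; lia.
    by move/eqP ->; rewrite mulr0.
  - by move: hk'; rewrite hki eqxx.
by rewrite hxy => /eqP; apply.
Qed.

HB.instance Definition _ := GRing.ComUnitRing_isIntegral.Build fps fps_integral.

End FPS.

(* The field of formal Laurent series F((x)) over a field F, realised as the *)
(* fraction field of F[[x]] (indeed F((x)) = F[[x]][1/x] = Frac F[[x]]).     *)
Definition laurent (F : fieldType) : fieldType := {fraction (fps F)}.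

(* p-adic integers Z_p = lim Z/p^n, an element being a compatible family of *)
(* residues a n \in {0, ..., p^n - 1} with a (n+1) = a n  (mod p^n).        *)
Definition padic_int (p : nat) : Type :=
  { a : nat -> nat | forall n, (a n < p ^ n)%N /\ (a n.+1 %% p ^ n)%N = a n }.

(* tau(alpha) = (1 - x)^alpha in F_p[[x]]: the n-th coefficient is that of   *)
(* the polynomial (1 - x)^m for any natural m = alpha (mod p^(n+1)); this is *)
(* the continuous extension of m |-> (1 - x)^m, since                        *)
(* (1 - x)^(p^k) = 1 - x^(p^k) in characteristic p and p^(n+1) > n.         *)
Definition tau (p : nat) (alpha : padic_int p) : fps 'F_p :=
  FPS (fun n => ((1 - 'X : {poly 'F_p}) ^+ (sval alpha n.+1))`_n).

Definition is_subfield (L : fieldType) (E : L -> Prop) : Prop :=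
  [/\ E 1,
      (forall x y, E x -> E y -> E (x - y)),
      (forall x y, E x -> E y -> E (x * y)) &
      (forall x, E x -> x != 0 -> E x^-1)].

Definition subfield_gen (L : fieldType) (S : L -> Prop) : L -> Prop :=
  fun z => forall E : L -> Prop, is_subfield E -> (forall x, S x -> E x) -> E z.

Definition K_tau (p : nat) : laurent 'F_p -> Prop :=
  subfield_gen (fun z => exists alpha : padic_int p, z = FracField.tofrac (tau alpha)).

Definition spans_over (L : fieldType) (K : L -> Prop) (v : nat -> L) : Prop :=
  forall z : L, exists (n : nat) (c : nat -> L),
    (forall i, (i < n)%N -> K (c i)) /\ z = \sum_(i < n) c i * v i.

(* Main.v *)
Require Import Defs.
From HB Require Import structures.
From mathcomp Require Import all_boot all_order all_algebra boolp zify ring.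
Set Implicit Arguments. Unset Strict Implicit. Unset Printing Implicit Defensive.
Import GRing.Theory.
Local Open Scope ring_scope.

Section Main.
Variable p : nat.
Hypothesis hp : prime p.
Local Notation F := ('F_p).
Local Notation FP := (fps F).

Lemma p_gt1 : (1 < p)%N. Proof. exact: prime_gt1. Qed.
Lemma p_gt0 : (0 < p)%N. Proof. exact: prime_gt0. Qed.

Definition agree (L : nat) (f : FP) (q : {poly F}) :=
  forall i, (i < L)%N -> coef f i = q`_i.

Lemma agreeD L f g q r : agree L f q -> agree L g r -> agree L (f + g) (q + r).
Proof. by move=> hf hg i hi; rewrite coefD -hf // -hg. Qed.
Lemma agreeB L f g q r : agree L f q -> agree L g r -> agree L (f - g) (q - r).
Proof. by move=> hf hg i hi; rewrite coefB -hf // -hg. Qed.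
Lemma agreeM L f g q r : agree L f q -> agree L g r -> agree L (f * g) (q * r).
Proof.
move=> hf hg i hi; rewrite fps_coefM coefM; apply: eq_bigr => j _.
have hj : (j <= i)%N by rewrite -ltnS.
rewrite hf ?hg //; first by rewrite (leq_ltn_trans (leq_subr _ _) hi).
by rewrite (leq_ltn_trans hj hi).
Qed.
Lemma agree1 L : agree L 1 1.
Proof. by move=> i hi; rewrite coef1. Qed.
Lemma agree_tp L f : agree L f (\poly_(i < L) coef f i).
Proof. by move=> i hi; rewrite coef_poly hi. Qed.

Definition Thin (D : nat) (A : FP -> Prop) := forall m, exists l : seq {poly F},
  (size l <= p ^ (m.+1 * D))%N /\ forall f, A f -> exists2 q, q \in l & agree (p ^ m) f q.

Lemma Thin_sub D (A B : FP -> Prop) : (forall f, B f -> A f) -> Thin D A -> Thin D B.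
Proof.
move=> hBA hA m; have [l [hs hl]] := hA m; exists l; split => // f /hBA; exact: hl.
Qed.

Definition next (A : FP -> Prop) f :=
  A f \/ exists a b, [/\ A a, A b & (f = a - b \/ f = a * b)].

Lemma Thin_next D A : Thin D A -> Thin (2 * D + 2) (next A).
Proof.
move=> hA m; have [l [hs hl]] := hA m.
exists (l ++ [seq a - b | a <- l, b <- l] ++ [seq a * b | a <- l, b <- l]); split.
  rewrite !size_cat !size_allpairs.
  set P := (p ^ (m.+1 * D))%N; set X := (p ^ (2 * m.+1))%N.
  have -> : (p ^ (m.+1 * (2 * D + 2)) = P * P * X)%N.
    by rewrite /P /X -!expnD; congr (p ^ _)%N; lia.
  have hP : (0 < P)%N by rewrite expn_gt0 p_gt0.
  have hX : (4 <= X)%N.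
    apply: (@leq_trans (p ^ 2)); last by apply: leq_pexp2l; [exact: p_gt0| lia].
    have := p_gt1; rewrite expnS expn1; nia.
  move: hs hP hX; set s := size l; nia.
move=> f [/hl [q hq hfq]|[a [b [ha hb hab]]]].
  by exists q => //; rewrite mem_cat hq.
have [qa hqa haa] := hl _ ha; have [qb hqb hbb] := hl _ hb.
case: hab => ->.
  exists (qa - qb); last exact: agreeB.
  by rewrite !mem_cat; apply/orP; right; apply/orP; left; apply: allpairs_f.
exists (qa * qb); last exact: agreeM.
by rewrite !mem_cat; apply/orP; right; apply/orP; right; apply: allpairs_f.
Qed.

Lemma Thin_add DA DB (A B : FP -> Prop) : Thin DA A -> Thin DB B ->
  Thin (DA + DB) (fun f => exists g h, [/\ A g, B h & f = g + h]).
Proof.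
move=> hA hB m; have [la [hsa hla]] := hA m; have [lb [hsb hlb]] := hB m.
exists [seq x + y | x <- la, y <- lb]; split.
  by rewrite size_allpairs mulnDr expnD leq_mul.
move=> f [g [h [hg hh ->]]].
have [qa hqa haa] := hla _ hg; have [qb hqb hbb] := hlb _ hh.
exists (qa + qb); last exact: agreeD.
by apply: allpairs_f.
Qed.

Lemma Thin_mulc D (A : FP -> Prop) c : Thin D A ->
  Thin D (fun f => exists g, A g /\ f = g * c).
Proof.
move=> hA m; have [l [hs hl]] := hA m.
exists [seq x * \poly_(i < p ^ m) coef c i | x <- l]; split; first by rewrite size_map.
move=> f [g [hg ->]]; have [q hq hgq] := hl _ hg.
exists (q * \poly_(i < p ^ m) coef c i); first exact: map_f.
exact/agreeM/agree_tp.
Qed.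

Lemma Thin0 : Thin 0 (fun f => f = 0).
Proof.
move=> m; exists [:: 0]; split; first by rewrite muln0 expn0.
by move=> f ->; exists 0; rewrite ?mem_seq1 // => i _; rewrite coef0.
Qed.

Lemma pcharP : p \in [pchar {poly F}].
Proof. by rewrite pchar_poly pchar_Fp. Qed.

Lemma frob j : (1 - 'X : {poly F}) ^+ (p ^ j) = 1 - 'X^(p ^ j).
Proof.
elim: j => [|j IH]; first by rewrite expn0 !expr1.
rewrite expnSr exprM IH -(pFrobenius_autE pcharP).
rewrite pFrobenius_autB_comm; last exact: mulrC.
by rewrite !pFrobenius_autE expr1n -exprM.
Qed.

Lemma coef_mul_one_sub P n t (q : {poly F}) : (n < P)%N ->
  (q * (1 - 'X^P) ^+ t)`_n = q`_n.
Proof.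
move=> hn; elim: t q => [|t IH] q; first by rewrite expr0 mulr1.
rewrite exprS mulrA IH mulrBr mulr1 coefB coefMXn hn subr0 //.
Qed.

Lemma coef_pow_mod c c' j n : (n < p ^ j)%N -> c = c' %[mod p ^ j] ->
  ((1 - 'X : {poly F}) ^+ c)`_n = ((1 - 'X) ^+ c')`_n.
Proof.
move=> hn; wlog hcc : c c' / (c <= c')%N.
  move=> H; case: (leqP c c') => h e; first exact: H.
  by symmetry; apply: H => //; apply: ltnW.
move=> /eqP; rewrite eq_sym eqn_mod_dvd // => /dvdnP [t ht].
have -> : c' = (c + t * p ^ j)%N by rewrite -ht subnKC.
by rewrite exprD mulnC exprM frob coef_mul_one_sub.
Qed.

Lemma amod (alpha : padic_int p) i k : (i <= k)%N ->
  (sval alpha k %% p ^ i = sval alpha i)%N.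
Proof.
case: alpha => a ha /=; elim: k => [|k IH] hik.
  by move: hik; rewrite leqn0 => /eqP ->; rewrite modn_small //; case: (ha 0%N).
case: (ltngtP i k.+1) => [hlt|hgt|->]; [|by rewrite leqNgt hgt in hik|]; last by rewrite modn_small //; case: (ha k.+1).
rewrite -IH //; have [_ <-] := ha k.
by apply/esym/modn_dvdm/dvdn_exp2l; rewrite -ltnS.
Qed.

Lemma tau_coef (alpha : padic_int p) m n : (n < p ^ m)%N ->
  coef (tau alpha) n = ((1 - 'X : {poly F}) ^+ (sval alpha m))`_n.
Proof.
move=> hn; rewrite /tau /=.
set i := minn n.+1 m.
have hni : (n < p ^ i)%N.
  rewrite /i; case: (leqP n.+1 m) => h.
    by rewrite (ltn_trans (ltnSn n)) // ltn_expl // p_gt1.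
  by [].
apply: (coef_pow_mod hni).
by rewrite !amod // /i ?geq_minl ?geq_minr.
Qed.

Definition V0 (f : FP) := f = 1 \/ exists alpha : padic_int p, f = tau alpha.

Lemma Thin_V0 : Thin 2 V0.
Proof.
move=> m; exists (1 :: [seq (1 - 'X : {poly F}) ^+ k | k <- iota 0 (p ^ m)]); split.
  rewrite /= size_map size_iota.
  have h1 : (p ^ m < p ^ (m.+1 * 2))%N by rewrite ltn_exp2l ?p_gt1 //; lia.
  exact: h1.
move=> f [->|[alpha ->]]; first by exists 1; [rewrite mem_head | exact: agree1].
exists ((1 - 'X) ^+ (sval alpha m)).
  rewrite in_cons; apply/orP; right; apply: map_f; rewrite mem_iota /= add0n.
  by case: (svalP alpha m).
by move=> n hn; rewrite (tau_coef _ hn).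
Qed.

Fixpoint Vn (n : nat) : FP -> Prop :=
  if n is n'.+1 then next (Vn n') else V0.
Fixpoint Dn (n : nat) : nat := if n is n'.+1 then (2 * Dn n' + 2)%N else 2%N.

Lemma Thin_Vn n : Thin (Dn n) (Vn n).
Proof. by elim: n => [|n IH] /=; [exact: Thin_V0 | exact: Thin_next]. Qed.

Lemma Vn_S n f : Vn n f -> Vn n.+1 f.
Proof. by move=> h; left. Qed.
Lemma Vn_le n n' f : (n <= n')%N -> Vn n f -> Vn n' f.
Proof.
move=> /subnK <-; elim: (n' - n)%N => [|k IH] // h; rewrite addSn; exact/Vn_S/IH.
Qed.
Lemma VnB n x y : Vn n x -> Vn n y -> Vn n.+1 (x - y).
Proof. by move=> hx hy; right; exists x, y; split => //; left. Qed.
Lemma VnM n x y : Vn n x -> Vn n y -> Vn n.+1 (x * y).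
Proof. by move=> hx hy; right; exists x, y; split => //; right. Qed.
Lemma Vn1 n : Vn n 1.
Proof. by apply: (@Vn_le 0) => //; left. Qed.

Lemma fld_sub (K : fieldType) (r s r' s' : K) : s != 0 -> s' != 0 ->
  r / s - r' / s' = (r * s' - r' * s) / (s * s').
Proof. by move=> h1 h2; field; rewrite h1 h2. Qed.
Lemma fld_mul (K : fieldType) (r s r' s' : K) :
  r / s * (r' / s') = (r * r') / (s * s').
Proof. by rewrite mulrACA invfM. Qed.

Local Notation tf := (@FracField.tofrac FP).
Local Notation LF := (laurent F).

Definition Qf (z : LF) := exists N r s, [/\ Vn N r, Vn N s, s != 0 & z = tf r / tf s].

Lemma tf_neq0 (s : FP) : s != 0 -> tf s != 0.
Proof. by rewrite tofrac_eq0. Qed.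

Lemma Qf_subfield : is_subfield Qf.
Proof.
split.
- exists 0%N, 1, 1; split; rewrite ?oner_neq0 //; try exact: Vn1.
  by rewrite tofrac1 divr1.
- move=> x y [N [r [s [hr hs hs0 ->]]]] [N' [r' [s' [hr' hs' hs0' ->]]]].
  set M := maxn N N'.
  have hr1 : Vn M r by apply: Vn_le hr; exact: leq_maxl.
  have hs1 : Vn M s by apply: Vn_le hs; exact: leq_maxl.
  have hr2 : Vn M r' by apply: Vn_le hr'; exact: leq_maxr.
  have hs2 : Vn M s' by apply: Vn_le hs'; exact: leq_maxr.
  exists M.+2, (r * s' - r' * s), (s * s'); split.
  + by apply: VnB; apply: VnM.
  + by apply/Vn_S/VnM.
  + by rewrite mulf_neq0.
  + have h1 := tf_neq0 hs0; have h2 := tf_neq0 hs0'.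
    rewrite tofracB !tofracM; exact: (fld_sub _ _ h1 h2).
- move=> x y [N [r [s [hr hs hs0 ->]]]] [N' [r' [s' [hr' hs' hs0' ->]]]].
  set M := maxn N N'.
  have hr1 : Vn M r by apply: Vn_le hr; exact: leq_maxl.
  have hs1 : Vn M s by apply: Vn_le hs; exact: leq_maxl.
  have hr2 : Vn M r' by apply: Vn_le hr'; exact: leq_maxr.
  have hs2 : Vn M s' by apply: Vn_le hs'; exact: leq_maxr.
  exists M.+1, (r * r'), (s * s'); split.
  + exact: VnM.
  + exact: VnM.
  + by rewrite mulf_neq0.
  + have h1 := tf_neq0 hs0; have h2 := tf_neq0 hs0'.
    by rewrite !tofracM; apply: fld_mul.
- move=> x [N [r [s [hr hs hs0 ->]]]] hx.
  have hr0 : r != 0 by apply: contraNneq hx => ->; rewrite tofrac0 mul0r.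
  by exists N, s, r; split => //; rewrite invf_div.
Qed.

Lemma K_Qf z : K_tau z -> Qf z.
Proof.
move=> hz; apply: hz; first exact: Qf_subfield.
move=> x [alpha ->]; exists 0%N, (tau alpha), 1; split.
- by right; exists alpha.
- by left.
- exact: oner_neq0.
- by rewrite tofrac1 divr1.
Qed.

Lemma fcoefD (f g : FP) n : coef (f + g) n = coef f n + coef g n. Proof. by []. Qed.
Lemma fcoefB (f g : FP) n : coef (f - g) n = coef f n - coef g n. Proof. by []. Qed.

Lemma det (f g S S' T T' : FP) L0 V i :
  f * S = T -> g * S' = T' ->
  (forall k, (k < L0)%N -> coef S k = coef S' k) ->
  (forall k, (k < L0)%N -> coef T k = coef T' k) ->
  (i <= V)%N -> coef S i != 0 ->
  forall j, (j < L0 - V)%N -> coef f j = coef g j.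
Proof.
move=> hf hg hS hT hiV hi.
set d := f - g.
have e : d * S = (T - T') + g * (S' - S) by rewrite /d -hf -hg; ring.
have hz : forall k, (k < L0)%N -> coef (d * S) k = 0.
  move=> k hk; rewrite e fcoefD fcoefB hT // subrr add0r fps_coefM.
  apply: big1 => l _; rewrite fcoefB hS ?subrr ?mulr0 //.
  exact: leq_ltn_trans (leq_subr _ _) hk.
have hex : exists i, coef S i != 0 by exists i.
case: (ex_minnP hex) => i0 hi0 hmin.
have hi0V : (i0 <= V)%N by apply: leq_trans (hmin _ hi) hiV.
suff hd : forall j, (j < L0 - V)%N -> coef d j = 0.
  by move=> j hj; apply/eqP; rewrite -subr_eq0; apply/eqP; exact: hd.
elim/ltn_ind => j IH hj.
have hk : (j + i0 < L0)%N by lia.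
have := hz _ hk; rewrite fps_coefM.
have hjo : (j < (j + i0).+1)%N by rewrite ltnS leq_addr.
rewrite (bigD1 (Ordinal hjo)) //= big1 ?addr0.
  by rewrite addKn => /eqP; rewrite mulf_eq0 (negbTE hi0) orbF => /eqP.
move=> k hkj; have hk' : (nat_of_ord k != j) by [].
case: (ltngtP k j) => hkj'.
- have := IH k hkj'; rewrite /d fcoefB => -> //; [by rewrite mul0r | lia].
- have : coef S (j + i0 - k) == 0.
    apply/negPn/negP => hn; move: (hmin _ hn); have := ltn_ord k; lia.
  by move/eqP ->; rewrite mulr0.
- by move: hk'; rewrite hkj' eqxx.
Qed.

Definition Small (S : FP -> Prop) := forall M, exists L, (M < L)%N /\
  exists l : seq {poly F}, (size l < p ^ (L - M))%N /\
    forall f, S f -> exists2 q, q \in l & agree L f q.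

Lemma Small_step (S : FP -> Prop) : Small S -> forall (x : nat * (nat -> F)),
  exists y : nat * (nat -> F), [/\ (x.1 < y.1)%N, (forall i, (i < x.1)%N -> y.2 i = x.2 i) &
    forall f, S f -> ~ (forall i, (i < y.1)%N -> coef f i = y.2 i)].
Proof.
move=> hS [M q] /=; have [L [hML [l [hsz hl]]]] := hS M.
pose l' := [seq \poly_(i < L) (r : {poly F})`_i | r : {poly F} <- l].
pose K := (L - M).-1.
have hK : K.+1 = (L - M)%N by rewrite /K prednK // subn_gt0.
pose ext (r : {ffun 'I_K.+1 -> F}) : {poly F} :=
  \poly_(i < L) (if (i < M)%N then q i else r (inord (i - M))).
have ext_inj : injective ext.
  move=> r1 r2 h; apply/ffunP => j.
  have := congr1 (fun P : {poly F} => P`_(M + j)) h; rewrite !coef_poly /=.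
  have hj : (M + j < L)%N by have := ltn_ord j; lia.
  rewrite hj ltnNge leq_addr /= addKn inord_val; exact.
have [r hr] : exists r, ext r \notin l'.
  case: (pselect (exists r, ext r \notin l')) => // hno; exfalso.
  have hall : forall r, ext r \in l' by move=> r; apply/negPn/negP => h; apply: hno; exists r.
  have hu : uniq [seq ext r | r <- enum {ffun 'I_K.+1 -> F}].
    by rewrite map_inj_uniq // enum_uniq.
  have hsub : {subset [seq ext r | r <- enum {ffun 'I_K.+1 -> F}] <= l'}.
    by move=> y /mapP [r _ ->].
  have := uniq_leq_size hu hsub.
  rewrite size_map -cardT card_ffun card_Fp // card_ord size_map hK.
  by rewrite leqNgt hsz.
exists (L, fun i => if (i < M)%N then q i else r (inord (i - M))); split => //=.
  by move=> i ->.
move=> f hf hag; have [q0 hq0 hfq] := hl _ hf.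
have : ext r \in l'.
  have -> : ext r = \poly_(i < L) q0`_i.
    apply/polyP => i; rewrite !coef_poly; case: ifP => // hi.
    by rewrite -hfq // hag.
  exact: map_f.
by rewrite (negbTE hr).
Qed.

Lemma diagonal (S : nat -> FP -> Prop) : (forall j, Small (S j)) ->
  exists w, forall j, ~ S j w.
Proof.
move=> hS.
have [g hg] := choice (fun (jx : nat * (nat * (nat -> F))) => Small_step (hS jx.1) jx.2).
pose st := fix st (j : nat) : nat * (nat -> F) :=
  if j is j'.+1 then g (j', st j') else (0%N, fun _ => 0).
have st_S j : st j.+1 = g (j, st j) by [].
have h1 j : (j <= (st j).1)%N.
  elim: j => [|j IH] //; rewrite st_S; have [h _ _] := hg (j, st j).
  exact: leq_ltn_trans IH h.
have h3 j k : ((st j).1 <= (st (k + j)).1)%N.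
  elim: k => [|k IH] //; rewrite addSn st_S; have [h _ _] := hg (k + j, st (k + j))%N.
  exact: leq_trans IH (ltnW h).
have h2 j k i : (i < (st j).1)%N -> (st (k + j)%N).2 i = (st j).2 i.
  move=> hi; elim: k => [|k IH] //; rewrite addSn st_S.
  have [_ h _] := hg (k + j, st (k + j))%N.
  rewrite h /=; first by rewrite IH.
  exact: leq_trans hi (h3 j k).
pose w : FP := FPS (fun i => (st i.+1).2 i).
have hw j i : (i < (st j).1)%N -> coef w i = (st j).2 i.
  move=> hi; change ((st i.+1).2 i = (st j).2 i).
  case: (leqP i.+1 j) => hij.
    rewrite -(subnK hij) h2 //; exact: leq_trans (h1 i.+1).
  have hji : (j <= i.+1)%N by apply: ltnW.
  by rewrite -(subnK hji) h2.
exists w => j hj; have [_ _ h] := hg (j, st j).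
apply: (h w hj) => i hi; rewrite -st_S in hi *; exact: hw.
Qed.

Lemma exp_big D c : exists m, (m.+1 * D + c < p ^ m)%N.
Proof.
pose k := (3 * D + c + 1)%N; exists (2 * k)%N.
have hk1 : ((2 * k).+1 * D + c < k * k)%N by rewrite /k; nia.
have hk2 : (k * k < 2 ^ k * 2 ^ k)%N.
  have := ltn_expl k (isT : (1 < 2)%N); nia.
apply: (leq_trans hk1); apply: (leq_trans (ltnW hk2)).
rewrite -expnD addnn -mul2n leq_exp2r ?p_gt1 //; rewrite /k; lia.
Qed.

Fixpoint beta (b : nat -> FP) n : FP := if n is n'.+1 then beta b n' * b n' else 1.
Fixpoint Mset (a b : nat -> FP) n N : FP -> Prop :=
  if n is n'.+1 then fun T => exists t r,
    [/\ Mset a b n' N t, Vn N r & T = t * b n' + r * (a n' * beta b n')]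
  else fun T => T = 0.
Fixpoint DM n N := if n is n'.+1 then (DM n' N + Dn N)%N else 0%N.

Lemma beta_neq0 b n : (forall i, b i != 0) -> beta b n != 0.
Proof. by move=> hb; elim: n => [|n IH] /=; [exact: oner_neq0 | rewrite mulf_neq0]. Qed.

Lemma Thin_M a b n N : Thin (DM n N) (Mset a b n N).
Proof.
elim: n => [|n IH] /=; first exact: Thin0.
apply: Thin_sub (Thin_add (Thin_mulc (b n) IH) (Thin_mulc (a n * beta b n) (Thin_Vn N))).
move=> f [t [r [ht hr ->]]]; exists (t * b n), (r * (a n * beta b n)); split => //.
  by exists t.
by exists r.
Qed.

Lemma M_mulV a b n N t s : Mset a b n N t -> Vn N s -> Mset a b n N.+1 (t * s).
Proof.
elim: n t => [|n IH] t /=; first by move=> -> _; rewrite mul0r.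
move=> [t0 [r [ht hr ->]]] hs; exists (t0 * s), (r * s); split.
- exact: IH.
- exact: VnM.
- ring.
Qed.

Lemma M_S a b n N t : Mset a b n N t -> Mset a b n N.+1 t.
Proof.
elim: n t => [|n IH] t //= [t0 [r [ht hr ->]]]; exists t0, r; split => //.
- exact: IH.
- exact: Vn_S.
Qed.

Lemma M_le a b n N N' t : (N <= N')%N -> Mset a b n N t -> Mset a b n N' t.
Proof.
move=> /subnK <-; elim: (N' - N)%N => [|k IH] // h; rewrite addSn; exact/M_S/IH.
Qed.

Lemma fld_span (K : fieldType) (T S0 B r s' A b : K) :
  S0 != 0 -> B != 0 -> s' != 0 -> b != 0 ->
  T / (S0 * B) + r / s' * (A / b) =
  ((T * s') * b + (r * S0) * (A * B)) / ((S0 * s') * (B * b)).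
Proof. by move=> h1 h2 h3 h4; field; rewrite h1 h2 h3 h4. Qed.

Lemma span_lem a b (v : nat -> LF) : (forall i, b i != 0) ->
  (forall i, v i = tf (a i) / tf (b i)) -> forall n (c : nat -> LF),
  (forall i, (i < n)%N -> Qf (c i)) -> exists N T s,
  [/\ Mset a b n N T, Vn N s, s != 0 & \sum_(i < n) c i * v i = tf T / tf (s * beta b n)].
Proof.
move=> hb hv; elim => [|n IH] c hc.
  exists 0%N, 0, 1; split => //; first by left.
    exact: oner_neq0.
  by rewrite big_ord0 tofrac0 mul0r.
have [N [T [s [hT hs hs0 he]]]] := IH c (fun i hi => hc i (ltnW hi)).
have [N' [r [s' [hr hs' hs0' hce]]]] := hc n (ltnSn n).
set M := maxn N N'.
have hT1 : Mset a b n M T by apply: M_le hT; exact: leq_maxl.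
have hs1 : Vn M s by apply: Vn_le hs; exact: leq_maxl.
have hr2 : Vn M r by apply: Vn_le hr; exact: leq_maxr.
have hs2 : Vn M s' by apply: Vn_le hs'; exact: leq_maxr.
exists M.+1, ((T * s') * b n + (r * s) * (a n * beta b n)), (s * s'); split.
- exists (T * s'), (r * s); split => //; [exact: M_mulV | exact: VnM].
- exact: VnM.
- by rewrite mulf_neq0.
rewrite big_ord_recr /= he hce hv.
have hB := beta_neq0 n hb.
rewrite !(tofracD, tofracM).
exact: (fld_span _ _ _ (tf_neq0 hs0) (tf_neq0 hB) (tf_neq0 hs0') (tf_neq0 (hb n))).
Qed.

Definition Sset a b n N V (w : FP) := exists T s,
  [/\ Mset a b n N T, Vn N s,
      exists i, (i <= V)%N /\ coef (s * beta b n) i != 0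
    & w * (s * beta b n) = T].

Definition Pw a b n N V L0 (qT qS : {poly F}) (w0 : FP) := exists T0 s0,
  [/\ Mset a b n N T0, Vn N s0,
      exists i, (i <= V)%N /\ coef (s0 * beta b n) i != 0,
      w0 * (s0 * beta b n) = T0
    & agree L0 T0 qT /\ agree L0 (s0 * beta b n) qS].

Lemma Small_Sset a b n N V : Small (Sset a b n N V).
Proof.
move=> M.
have [m hm] := exp_big (DM n N + Dn N) (V + M).
set L0 := (p ^ m)%N.
exists (L0 - V)%N; split; first by rewrite /L0; lia.
have [lT [hsT hlT]] := Thin_M a b n N m.
have [lS [hsS hlS]] := Thin_mulc (beta b n) (Thin_Vn N) m.
pose rep qT qS : {poly F} :=
  match pselect (exists w0, Pw a b n N V L0 qT qS w0) with
  | left h => \poly_(i < L0 - V) coef (projT1 (cid h)) i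
  | right _ => 0 end.
exists [seq rep x y | x <- lT, y <- lS]; split.
  rewrite size_allpairs; apply: (leq_ltn_trans (leq_mul hsT hsS)).
  rewrite -expnD -mulnDr ltn_exp2l ?p_gt1 //; rewrite /L0; lia.
move=> w [T [s [hT hs [i [hiV hi]] hwT]]].
have [qT hqT hTq] := hlT _ hT.
have [qS hqS hSq] := hlS (s * beta b n) (ex_intro _ s (conj hs erefl)).
exists (rep qT qS); first by apply: allpairs_f.
have hP : exists w0, Pw a b n N V L0 qT qS w0.
  by exists w, T, s; split => //; exists i.
rewrite /rep; case: pselect => [h|//].
case: (cid h) => w0 [T0 [s0 [hT0 hs0 _ hw0 [hTq0 hSq0]]]] /=.
move=> j hj; rewrite coef_poly hj.
apply: (det (L0 := L0) hwT hw0 _ _ hiV hi) => // k hk; first by rewrite hSq // hSq0.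
by rewrite hTq // hTq0.
Qed.

Lemma Small0 : Small (fun _ => False).
Proof.
move=> M; exists M.+1; split => //; exists [::]; split => //.
by rewrite /= expn_gt0 p_gt0.
Qed.

Lemma frac_dec (x : LF) : exists ab : FP * FP, ab.2 != 0 /\ x = tf ab.1 / tf ab.2.
Proof.
elim/quotW: x => r. exists (\n_r, \d_r); split; first exact: denom_ratioP.
apply: (@mulIf _ (tf \d_r)); first by rewrite tofrac_eq0 denom_ratioP.
rewrite /= divfK ?tofrac_eq0 ?denom_ratioP //.
unlock FracField.tofrac.
rewrite /GRing.mul /=.
rewrite !piE. apply/eqmodP; rewrite /= FracField.equivfE /FracField.mulf.
rewrite !numden_Ratio ?(oner_eq0, mulf_neq0, denom_ratioP) //.
by rewrite !mulr1 mulrC.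
Qed.

Lemma main_sec (v : nat -> LF) : ~ spans_over (@K_tau p) v.
Proof.
move=> hsp.
have [ab hab] := choice (fun i => frac_dec (v i)).
pose a i := (ab i).1; pose b i := (ab i).2.
have hb i : b i != 0 by case: (hab i).
have hv i : v i = tf (a i) / tf (b i) by case: (hab i).
pose S j := match (unpickle j : option (nat * nat * nat)) with
  | Some (n, N, V) => Sset a b n N V | None => fun _ => False end.
have hS j : Small (S j).
  rewrite /S; case: (unpickle j : option (nat * nat * nat)) => [[[n N] V]|].
    exact: Small_Sset.
  exact: Small0.
have [w hw] := diagonal hS.
have [n [c [hc he]]] := hsp (tf w).
have [N [T [s [hT hs hs0 heq]]]] :=
  span_lem hb hv (fun i hi => K_Qf (hc i hi)).
have hSb : s * beta b n != 0 by rewrite mulf_neq0 // beta_neq0.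
have hwT : w * (s * beta b n) = T.
  apply/eqP; rewrite -tofrac_eq tofracM he heq (divfK (tf_neq0 hSb)).
  exact: eqxx.
have [i hi] := fps_nz_coef hSb.
apply: (hw (pickle (n, N, i))); rewrite /S pickleK.
exists T, s; split => //; exists i; split => //.
Qed.
End Main.

Theorem lemma3p2 (p : nat) (hp : prime p) (v : nat -> laurent 'F_p) :
  ~ spans_over (@K_tau p) v.
Proof. exact: main_sec hp v. Qed.
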